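(* For every predicate $P:\{0,1\}^K\to\{0,1\}$ and $x\in\{0,1\}^N$, there is a DNF formula $\psi_x$ over $\{0,1\}^{N\cdot K}$ with at most $2^K$ terms such that $P_x(z^S)=\psi_x(z^S)$ for every hyperedge $S$. Moreover, for any hyperedge $S$, at most one term of $\psi_x$ is satisfied by $z^S$. Furthermore, there exists a CNF formula $\phi_x$ over $\{0,1\}^{N\cdot K}$ with at most $2^K$ clauses such that $\phi_x(z^S)=\psi_x(z^S)$ for every hyperedge $S$.
   Context: A hyperedge is an ordered tuple $S=(i_1,\dots,i_K)$ of $K$ distinct elements of $[N]$; $x_S=(x_{i_1},\dots,x_{i_K})$. Its encoding $z^S\in\{0,1\}^{N\cdot K}$ is the concatenation of $K$ vectors in $\{0,1\}^N$, where the $j$-th vector has $0$ in component $i_j$ and $1$ elsewhere. For $z\in\{0,1\}^{N\cdot K}$, $z_{j,l}=z_{(j-1)N+l}$. $P_x:\{0,1\}^{N\cdot K}\to\{0,1\}$ is any function satisfying $P_x(z^S)=P(x_S)$ for every hyperedge $S$. *)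

(* Defs.v *)
From mathcomp Require Import all_boot.
Set Implicit Arguments. Unset Strict Implicit. Unset Printing Implicit Defensive.

(* A literal (v, b) is satisfied by z iff z v = b
   (b = true: positive literal z_v, b = false: negated literal ~z_v). *)
Definition literal (n : nat) := ('I_n * bool)%type.
Definition lit_eval n (z : 'I_n -> bool) (l : literal n) : bool := z l.1 == l.2.

Definition term_eval n (z : 'I_n -> bool) (t : seq (literal n)) : bool :=
  all (lit_eval z) t.
Definition clause_eval n (z : 'I_n -> bool) (c : seq (literal n)) : bool :=
  has (lit_eval z) c.

Definition dnf (n : nat) := seq (seq (literal n)).
Definition cnf (n : nat) := seq (seq (literal n)).
Definition dnf_eval n (z : 'I_n -> bool) (f : dnf n) : bool := has (term_eval z) f.
Definition cnf_eval n (z : 'I_n -> bool) (f : cnf n) : bool := all (clause_eval z) f.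

(* A hyperedge: an ordered K-tuple of distinct elements of [N]. *)
Definition hyperedge (N K : nat) (S : 'I_K -> 'I_N) : Prop := injective S.

(* Encoding z^S in {0,1}^(N*K): with 0-based indices, coordinate j*N + l
   (block j < K, position l < N) is 0 iff l = S j, and 1 otherwise. *)
Definition zS (N K : nat) (S : 'I_K -> 'I_N) : 'I_(N * K) -> bool :=
  fun i => ~~ [exists j : 'I_K, nat_of_ord i == j * N + S j].

Definition restr (N K : nat) (x : 'I_N -> bool) (S : 'I_K -> 'I_N) : {ffun 'I_K -> bool} :=
  [ffun j => x (S j)].

(* Main.v *)
Require Import Defs.
From mathcomp Require Import all_boot.
From mathcomp Require Import zify.

Lemma blk_eq (N K : nat) (j j' : 'I_K) (l l' : 'I_N) :
  (j * N + l == j' * N + l') = (j == j') && (l == l').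
Proof.
have N0 : 0 < N by case: l => [m Hm]; apply: leq_ltn_trans Hm.
apply/eqP/andP => [E|[/eqP -> /eqP ->]] //.
have E1 : (j * N + l) %/ N = (j' * N + l') %/ N by rewrite E.
have E2 : (j * N + l) %% N = (j' * N + l') %% N by rewrite E.
rewrite !divnMDl // !divn_small ?addn0 // in E1.
rewrite !modnMDl !modn_small // in E2.
by split; apply/eqP; apply: val_inj.
Qed.

Section S.
Variables (N K : nat) (x : 'I_N -> bool).

Definition cond (a : {ffun 'I_K -> bool}) (i : 'I_(N * K)) : bool :=
  [exists j : 'I_K, exists l : 'I_N, (nat_of_ord i == j * N + l) && (x l != a j)].

Definition tm (b : bool) (a : {ffun 'I_K -> bool}) : seq (literal (N * K)) :=
  [seq (i, b) | i <- enum 'I_(N * K) & cond a i].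

Lemma key (a : {ffun 'I_K -> bool}) (S : 'I_K -> 'I_N) :
  all (fun i => cond a i ==> zS S i) (enum 'I_(N * K)) = (restr x S == a).
Proof.
apply/allP/eqP => [H|<-].
  apply/ffunP => j; rewrite ffunE; apply/eqP/negPn/negP => hne.
  have lt : j * N + S j < N * K.
    have := ltn_ord j; have := ltn_ord (S j); nia.
  have := H (Ordinal lt) (mem_enum _ _).
  have -> : cond a (Ordinal lt).
    by apply/existsP; exists j; apply/existsP; exists (S j); rewrite /= eqxx.
  rewrite /zS /= => /negP; apply; apply/existsP; exists j => /=; exact: eqxx.
move=> i _; apply/implyP => /existsP [j /existsP [l /andP [/eqP Ei hx]]].
rewrite /zS; apply/negP => /existsP [j' /eqP].
rewrite Ei => /eqP; rewrite blk_eq => /andP [/eqP Ej /eqP El].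
by move: hx; rewrite ffunE El Ej eqxx.
Qed.

Lemma term_key a S : term_eval (zS S) (tm true a) = (restr x S == a).
Proof.
rewrite -key /term_eval /tm all_map all_filter; apply: eq_all => i /=.
by rewrite /lit_eval /=; case: (zS S i).
Qed.

Lemma clause_key a S : clause_eval (zS S) (tm false a) = (restr x S != a).
Proof.
rewrite -key /clause_eval /tm has_map -[has _ _]negbK -all_predC all_filter; congr negb.
apply: eq_all => i /=.
by rewrite /lit_eval /=; case: (zS S i); case: (cond a i).
Qed.

End S.

Theorem lemma8p4 (N K : nat) (P : {ffun 'I_K -> bool} -> bool) (x : 'I_N -> bool) :
  exists psi : dnf (N * K),
    size psi <= 2 ^ K /\
    (forall S : 'I_K -> 'I_N, hyperedge S -> dnf_eval (zS S) psi = P (restr x S)) /\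
    (forall S : 'I_K -> 'I_N, hyperedge S -> count (term_eval (zS S)) psi <= 1) /\
    (exists phi : cnf (N * K),
       size phi <= 2 ^ K /\
       (forall S : 'I_K -> 'I_N, hyperedge S -> cnf_eval (zS S) phi = dnf_eval (zS S) psi)).
Proof.
have card : size (enum {ffun 'I_K -> bool}) = 2 ^ K.
  by rewrite -cardE card_ffun card_bool card_ord.
have hdnf : forall S, dnf_eval (zS S) [seq @tm N K x true a | a <- enum {ffun 'I_K -> bool} & P a]
   = P (restr x S).
  move=> S; rewrite /dnf_eval has_map.
  apply/hasP/idP => [[a]|Pr].
    by rewrite mem_filter => /andP [Pa _] /=; rewrite term_key => /eqP ->.
  exists (restr x S); first by rewrite mem_filter mem_enum Pr.
  by rewrite /= term_key eqxx.
exists [seq @tm N K x true a | a <- enum {ffun 'I_K -> bool} & P a].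
split; first by rewrite size_map -card size_filter count_size.
split; first by move=> S _; exact: hdnf.
split.
  move=> S _; rewrite count_map count_filter.
  apply: (@leq_trans (count (pred1 (restr x S)) (enum {ffun 'I_K -> bool}))).
    by apply: sub_count => a /= /andP [+ _]; rewrite term_key eq_sym.
  by rewrite count_uniq_mem ?enum_uniq // mem_enum.
exists [seq @tm N K x false a | a <- enum {ffun 'I_K -> bool} & ~~ P a].
split; first by rewrite size_map -card size_filter count_size.
move=> S _; rewrite hdnf /cnf_eval all_map all_filter.
apply/allP/idP => [H|Pr a _].
  apply/negPn/negP => nP.
  have := H (restr x S) (mem_enum _ _); rewrite /= nP /= clause_key eqxx //.
rewrite /= clause_key; apply/implyP => nP; apply/eqP => E.
by move: nP; rewrite -E Pr.
Qed.
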